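(* Let $\mathbb{K}$ be a topological field, $d\in\mathbb{N}$, $F$ a topological $\mathbb{K}$-vector space, $U\subseteq\mathbb{K}^d$ open or of the form $U_1\times\cdots\times U_d$ with $U_i\subseteq\mathbb{K}$ having dense interior, and $f\colon U\to F$. If $f$ is $C^k_{BGN}$ for some $k\in\mathbb{N}_0$, then $f$ is $C^k_{SDS}$. If $\mathbb{K}$ is a valued field, $\sigma>0$ and $f$ is $C^{k,\sigma}_{BGN}$, then $f$ is $C^{k,\sigma}_{SDS}$.
   Context: Topological fields are Hausdorff and non-discrete; vector spaces Hausdorff; a valued field carries an absolute value defining a non-discrete topology. BGN: for $V\subseteq E$ with dense interior, $V^{[1]}=\{(x,y,t)\in V\times E\times\mathbb{K}: x+ty\in V\}$, $V^{]1[}$ its subset with $t\neq0$, $g^{]1[}(x,y,t)=(g(x+ty)-g(x))/t$. $g$ is $C^0_{BGN}$ if continuous, $C^1_{BGN}$ if moreover $g^{]1[}$ extends continuously to $g^{[1]}$ on $V^{[1]}$, $C^k_{BGN}$ if $C^1_{BGN}$ with $g^{[1]}$ $C^{k-1}_{BGN}$; $g^{[k]}=(g^{[1]})^{[k-1]}$, $g^{[0]}=g$. SDS: for $\alpha\in\mathbb{N}_0^d$, write $x\in\mathbb{K}^{d+|\alpha|}$ as $(x^{(1)},\ldots,x^{(d)})$ with $x^{(i)}=(x^{(i)}_0,\ldots,x^{(i)}_{\alpha_i})$; $U^{<\alpha>}$: all $x$ with $(x^{(1)}_{i_1},\ldots,x^{(d)}_{i_d})\in U$ for all $0\le i_\ell\le\alpha_\ell$;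 $U^{>\alpha<}$: those with pairwise distinct entries within each $x^{(i)}$; $f^{>0<}=f$, $f^{>\alpha<}(x)=\sum_{j_1,\ldots,j_d}\big(\prod_{\ell}\prod_{k_\ell\neq j_\ell}(x^{(\ell)}_{j_\ell}-x^{(\ell)}_{k_\ell})^{-1}\big)f(x^{(1)}_{j_1},\ldots,x^{(d)}_{j_d})$ ($0\le j_\ell,k_\ell\le\alpha_\ell$). $f$ is $C^k_{SDS}$ if continuous and, for every $1\le|\alpha|\le k$, $f^{>\alpha<}$ has a continuous extension $f^{<\alpha>}$ to $U^{<\alpha>}$ ($f^{<0>}=f$). Hölder: a gauge on $E$ is $q\colon E\to[0,\infty[$ with $q(tx)=|t|q(x)$ and $\{q<r\}$ a $0$-neighbourhood for all $r>0$; $g\colon V\to F$ is $C^{0,\sigma}$ if for each $x_0\in V$ and gauge $q$ on $F$ there exist a gauge $p$ on $E$ and a neighbourhood $W$ of $x_0$ in $V$ with $q(g(y)-g(x))\le p(y-x)^\sigma$ on $W$. $C^{k,\sigma}_{BGN}$: $C^k_{BGN}$ with all $f^{[j]}$ ($j\le k$) $C^{0,\sigma}$; $C^{k,\sigma}_{SDS}$: $C^k_{SDS}$ with all $f^{<\alpha>}$ ($|\alpha|\le k$) $C^{0,\sigma}$. *)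

(* Defs.v *)
From HB Require Import structures.
From mathcomp Require Import all_boot all_order all_algebra.
From mathcomp Require Import all_classical all_reals topology function_spaces exp.
Set Implicit Arguments.
Unset Strict Implicit.
Unset Printing Implicit Defensive.
Import Order.TTheory GRing.Theory Num.Theory.
Local Open Scope classical_set_scope.
Local Open Scope ring_scope.

(** * Carriers: a field with a topology, and K-modules with a topology.
    The axioms (continuity of operations, Hausdorff, non-discrete) are
    imposed separately as Prop predicates below. *)
HB.structure Definition TopNmod := {M of Topological M & GRing.Nmodule M}.
HB.structure Definition TopZmod := {M of Topological M & GRing.Zmodule M}.
HB.structure Definition TopLmod (K : nzRingType) :=
  {M of Topological M & GRing.Lmodule K M}.
HB.structure Definition TopField := {K of GRing.Field K & Topological K}.
HB.saturate prod.

Section Carriers.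
Variable K : TopField.type.

Definition Kv := K^o.
HB.instance Definition _ := GRing.Lmodule.on Kv.
HB.instance Definition _ := Topological.copy Kv K.

Definition Kpow (I : finType) := {ptws I -> Kv}.
HB.instance Definition _ (I : finType) := Topological.on (Kpow I).
HB.instance Definition _ (I : finType) :=
  GRing.Lmodule.copy (Kpow I) (I -> Kv).
End Carriers.

Definition is_topological_field (K : TopField.type) : Prop :=
  [/\ continuous (fun p : K * K => p.1 + p.2),
      continuous (fun x : K => - x),
      continuous (fun p : K * K => p.1 * p.2),
      (forall x : K, x != 0 -> ((fun y : K => y^-1) @ x --> x^-1)) &
      hausdorff_space K /\ ~ (forall x : K, open [set x])].

Definition is_tvs (K : TopField.type) (F : TopLmod.type K) : Prop :=
  [/\ continuous (fun p : F * F => p.1 + p.2),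
      continuous (fun p : Kv K * F => p.1 *: p.2) &
      hausdorff_space F].

Definition is_valued_field (K : TopField.type) (R : realType) (abs : K -> R)
  : Prop :=
  [/\ (forall x, 0 <= abs x),
      (forall x, abs x = 0 <-> x = 0),
      (forall x y, abs (x * y) = abs x * abs y),
      (forall x y, abs (x + y) <= abs x + abs y) &
      (forall (x : K) (A : set K),
          nbhs x A <-> exists2 e : R, 0 < e & [set y | abs (y - x) < e] `<=` A)].

Section Defs.
Variables (K : TopField.type) (F : TopLmod.type K).

Definition gauge (R : realType) (abs : K -> R) (E : TopLmod.type K) (q : E -> R)
  : Prop :=
  [/\ (forall x, 0 <= q x),
      (forall (t : Kv K) (x : E), q (t *: x) = abs t * q x) &
      (forall r : R, 0 < r -> nbhs (0 : E) [set x | q x < r])].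

Definition C0sigma (R : realType) (abs : K -> R) (sigma : R)
  (E : TopLmod.type K) (V : set E) (g : E -> F) : Prop :=
  forall x0, V x0 -> forall q : F -> R, gauge abs q ->
    exists p : E -> R, gauge abs p /\
    exists2 W : set E, nbhs x0 W &
      forall x y, V x -> V y -> W x -> W y ->
        q (g y - g x) <= powR (p (y - x)) sigma.

Definition V1 (E : TopLmod.type K) (V : set E) : set (E * E * Kv K) :=
  [set z | V z.1.1 /\ V (z.1.1 + z.2 *: z.1.2)].

Definition V1o (E : TopLmod.type K) (V : set E) : set (E * E * Kv K) :=
  [set z | V1 V z /\ z.2 != 0].

Definition gdq (E : TopLmod.type K) (g : E -> F) : E * E * Kv K -> F :=
  fun z => (z.2 : K)^-1 *: (g (z.1.1 + z.2 *: z.1.2) - g z.1.1).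

Fixpoint CkBGN (k : nat) (E : TopLmod.type K) (V : set E) (g : E -> F) : Prop :=
  {within V, continuous g} /\
  match k with
  | 0 => True
  | k'.+1 => exists g1 : E * E * Kv K -> F,
      (forall z, V1o V z -> g1 z = gdq g z) /\ CkBGN k' (V1 V) g1
  end.

Fixpoint CksigmaBGN (R : realType) (abs : K -> R) (sigma : R)
  (k : nat) (E : TopLmod.type K) (V : set E) (g : E -> F) : Prop :=
  [/\ {within V, continuous g}, C0sigma abs sigma V g &
  match k with
  | 0 => True
  | k'.+1 => exists g1 : E * E * Kv K -> F,
      (forall z, V1o V z -> g1 z = gdq g z) /\
      CksigmaBGN abs sigma k' (V1 V) g1
  end].

Variable d : nat.

Definition mabs (alpha : 'I_d -> nat) : nat := (\sum_(i < d) alpha i)%N.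

(** the coordinates of K^{d+|alpha|}: pairs (i, j) with j <= alpha_i *)
Definition sds_idx (alpha : 'I_d -> nat) : finType :=
  {i : 'I_d & 'I_(alpha i).+1}.

Local Notation sds_pt alpha := (Kpow K (sds_idx alpha)).

Definition sds_sel (alpha : 'I_d -> nat) (x : sds_pt alpha)
  (j : {dffun forall i : 'I_d, 'I_(alpha i).+1}) : Kpow K 'I_d :=
  fun i => x (Tagged (fun i => 'I_(alpha i).+1) (j i)).

Definition U_ang (U : set (Kpow K 'I_d)) (alpha : 'I_d -> nat)
  : set (sds_pt alpha) :=
  [set x | forall j, U (sds_sel x j)].

Arguments U_ang : clear implicits.

Definition U_brack (U : set (Kpow K 'I_d)) (alpha : 'I_d -> nat)
  : set (sds_pt alpha) :=
  [set x | U_ang U alpha x /\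
     forall (i : 'I_d) (j k : 'I_(alpha i).+1), j != k ->
       x (Tagged (fun i => 'I_(alpha i).+1) j)
         != x (Tagged (fun i => 'I_(alpha i).+1) k)].

Arguments U_brack : clear implicits.
Definition fdd (f : Kpow K 'I_d -> F) (alpha : 'I_d -> nat)
  (x : sds_pt alpha) : F :=
  \sum_(j : {dffun forall i : 'I_d, 'I_(alpha i).+1})
    (\prod_(l < d) \prod_(k : 'I_(alpha l).+1 | k != j l)
        ((x (Tagged (fun i => 'I_(alpha i).+1) (j l))
          - x (Tagged (fun i => 'I_(alpha i).+1) k) : K)^-1))
    *: f (sds_sel x j).

Definition CkSDS (k : nat) (U : set (Kpow K 'I_d)) (f : Kpow K 'I_d -> F)
  : Prop :=
  {within U, continuous f} /\
  forall alpha : 'I_d -> nat, (1 <= mabs alpha <= k)%N ->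
    exists h : sds_pt alpha -> F,
      {within U_ang U alpha, continuous h} /\
      (forall x, U_brack U alpha x -> h x = fdd f x).

Definition CksigmaSDS (R : realType) (abs : K -> R) (sigma : R)
  (k : nat) (U : set (Kpow K 'I_d)) (f : Kpow K 'I_d -> F) : Prop :=
  [/\ {within U, continuous f}, C0sigma abs sigma U f &
  forall alpha : 'I_d -> nat, (1 <= mabs alpha <= k)%N ->
    exists h : sds_pt alpha -> F,
      [/\ {within U_ang U alpha, continuous h},
          C0sigma abs sigma (U_ang U alpha) h &
          (forall x, U_brack U alpha x -> h x = fdd f x)]].
End Defs.

(* Main.v *)
Require Import Defs.
From HB Require Import structures.
From mathcomp Require Import all_boot all_order all_algebra.
From mathcomp Require Import all_classical all_reals topology function_spaces exp.
From mathcomp Require Import ring.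
Import Order.TTheory GRing.Theory Num.Theory.
Local Open Scope classical_set_scope.
Local Open Scope ring_scope.
Section Topo.

Lemma ptws_cont (X Y : topologicalType) (I : eqType) (g : X -> {ptws I -> Y}) :
  (forall i, continuous (fun x => g x i)) -> continuous g.
Proof.
move=> h x; apply/cvg_sup => i.
have := @continuous_comp_initial _ X Y (fun f : I -> Y => f i) g (h i).
by move=> /(_ x).
Qed.

Lemma pair_cont (X Y Z : topologicalType) (f : X -> Y) (g : X -> Z) :
  continuous f -> continuous g -> continuous (fun x => (f x, g x)).
Proof.
move=> cf cg x; apply: cvg_pair; [exact: cf|exact: cg].
Qed.

Lemma within_comp (X Y Z : topologicalType) (A : set X) (V : set Y)
  (phi : X -> Y) (g : Y -> Z) :
  {within V, continuous g} -> continuous phi -> (forall x, A x -> V (phi x)) ->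
  {within A, continuous (g \o phi)}.
Proof.
move=> cg cphi AV.
apply/subspace_continuousP => x Ax.
have /subspace_continuousP /(_ _ (AV _ Ax)) cg' := cg.
apply: cvg_trans; last exact: cg'.
move=> W /= hW.
have := cphi x _ hW; rewrite /within /=.
move=> h; exact: (filterS (fun y hy Ay => hy (AV _ Ay)) h).
Qed.

End Topo.
Arguments within_comp {X Y Z A V phi g}.
Section OneD.
Variable K : fieldType.
Definition Wp {m : nat} (y : 'I_m.+1 -> K) (X : pred 'I_m.+1) (s : 'I_m.+1) : K :=
  \prod_(k | X k && (k != s)) (y s - y k)^-1.

Lemma W_eq m y (X X' : pred 'I_m.+1) s :
  (forall k, k != s -> X k = X' k) -> Wp y X s = Wp y X' s.
Proof.
move=> h; apply: eq_bigl => k; case: (k =P s) => [->|/eqP ne]; first by rewrite !andbF.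
by rewrite h.
Qed.

Lemma W_split m y (X : pred 'I_m.+1) s y0 : X y0 -> y0 != s ->
  Wp y X s = Wp y [pred k | X k && (k != y0)] s * (y s - y y0)^-1.
Proof.
move=> hX hn; rewrite /Wp (bigD1 y0) /=; last by rewrite hX hn.
rewrite mulrC; congr (_ * _); apply: eq_bigl => k.
by rewrite andbAC.
Qed.

Lemma oneD m (y : 'I_m.+1 -> K) (T : pred 'I_m.+1) A B s :
  injective y -> T A -> ~~ T B ->
  (if T s || (s == B) then Wp y [pred k | T k || (k == B)] s else 0) =
  (y B - y A)^-1 *
  ((if (T s && (s != A)) || (s == B) then Wp y [pred k | (T k && (k != A)) || (k == B)] s else 0)
   - (if T s then Wp y T s else 0)).
Proof.
move=> yi hA hB.
have AB : A != B by apply/eqP => e; move: hB; rewrite -e hA.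
have yne : forall u v, u != v -> y u - y v != 0.
  by move=> u v uv; rewrite subr_eq0; apply/eqP => /yi e; move: uv; rewrite e eqxx.
pose TA := [pred k | T k && (k != A)].
case: (s =P B) => [->|sB].
  rewrite orbT (negbTE hB) /= subr0.
  have e1 : Wp y [pred k | T k || (k == B)] B = Wp y T B.
    by apply: W_eq => k kB /=; rewrite (negbTE kB) orbF.
  have e2 : Wp y [pred k | (T k && (k != A)) || (k == B)] B = Wp y TA B.
    by apply: W_eq => k kB /=; rewrite (negbTE kB) orbF.
  rewrite e1 e2 (@W_split _ y T B A hA AB) mulrC; congr (_ * _).
have sB' : (s == B) = false by apply/eqP.
rewrite ?sB' !orbF.
case: (s =P A) => [->|sA].
  rewrite hA ?eqxx ?andbF /= sub0r.
  rewrite (@W_split _ _ _ A B) /=; [|by rewrite eqxx orbT|by rewrite eq_sym].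
  have e1 : Wp y [pred k | (T k || (k == B)) && (k != B)] A = Wp y T A.
    apply: W_eq => k _ /=; case: (k =P B) => [->|/eqP kB] /=; last by rewrite orbF andbT.
    by rewrite (negbTE hB).
  by rewrite e1 -opprB invrN mulrN mulrN mulrC.
have sA' : (s != A) by apply/eqP.
rewrite ?sA' andbT.
case hs : (T s) => //=; last by rewrite subrr mulr0.
rewrite (@W_split _ _ _ s B) /=; [|by rewrite eqxx orbT|by rewrite eq_sym; apply/eqP].
rewrite (@W_split _ _ [pred k | (T k && (k != A)) || (k == B)] s B) /=;
  [|by rewrite eqxx orbT|by rewrite eq_sym; apply/eqP].
rewrite (@W_split _ _ T s A) //; last by rewrite eq_sym.
have e1 : Wp y [pred k | (T k || (k == B)) && (k != B)] s = Wp y T s.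
  apply: W_eq => k _ /=; case: (k =P B) => [->|/eqP kB] /=; last by rewrite orbF andbT.
  by rewrite (negbTE hB).
have e2 : Wp y [pred k | ((T k && (k != A)) || (k == B)) && (k != B)] s = Wp y TA s.
  apply: W_eq => k _ /=; case: (k =P B) => [->|/eqP kB] /=; last by rewrite orbF andbT.
  by rewrite (negbTE hB).
rewrite e1 e2 (@W_split _ _ T s A) //; last by rewrite eq_sym.
have h1 := yne s A sA'.
have h2 : y s - y B != 0 by apply: yne; apply/eqP.
have h3 : y B - y A != 0 by apply: yne; rewrite eq_sym.
field.
by rewrite h1 h2 h3.
Qed.
End OneD.
Arguments Wp {K m}.
Section Comb.
Variable d : nat.
Definition step := ('I_d * nat * nat)%type.
Definition ren (i : 'I_d) (a b : nat) (l : 'I_d) (n : nat) : nat :=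
  if (l == i) && (n == a) then b else n.
Definition renc i a b (c : 'I_d -> nat) := fun l => ren i a b l (c l).
Definition rens i a b (st : nat -> step) : nat -> step :=
  fun k => ((st k).1.1, ren i a b (st k).1.1 (st k).1.2, ren i a b (st k).1.1 (st k).2).
Fixpoint slots (c : 'I_d -> nat) (st : nat -> step) (n : nat) (l : 'I_d) (q : nat) : bool :=
  match n with
  | 0 => q == c l
  | n.+1 => slots c st n l q ||
      (((st n).1.1 == l) && (((st n).1.2 == q) || ((st n).2 == q)))
  end.
Fixpoint valid (be : 'I_d -> nat) (c : 'I_d -> nat) (st : nat -> step) (n : nat) : Prop :=
  match n with
  | 0 => forall l, (c l <= be l)%N
  | n.+1 => [/\ valid be c st n, slots c st n (st n).1.1 (st n).1.2,
      ~~ slots c st n (st n).1.1 (st n).2 & ((st n).2 <= be (st n).1.1)%N]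
  end.

Lemma ren_inj i a b l m q : (l == i -> m != b) -> (l == i -> q != b) ->
  (ren i a b l m == ren i a b l q) = (m == q).
Proof.
rewrite /ren; case: (l =P i) => [_ /(_ isT) hm /(_ isT) hq|_ _ _] /=; last by [].
case: (m =P a) => [->|ma]; case: (q =P a) => [->|qa].
- by rewrite !eqxx.
- rewrite eq_sym (negbTE hq); apply/esym/eqP => e; apply: qa; by rewrite -e.
- rewrite (negbTE hm); apply/esym/eqP => e; apply: ma; by rewrite e.
- by [].
Qed.

Lemma slots_fresh c st n i b m : ~~ slots c st n i b -> slots c st n i m -> m != b.
Proof. by move=> h hm; apply/eqP => e; move: h; rewrite -e hm. Qed.

Lemma slots_ren n c st i a b l q : ~~ slots c st n i b -> (l == i -> q != b) ->
  slots (renc i a b c) (rens i a b st) n l (ren i a b l q) = slots c st n l q.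
Proof.
elim: n => [|n IH] /= hf hq.
  rewrite /renc ren_inj //.
  move=> /eqP e; subst l; apply/eqP => e'; move: hf; by rewrite e' eqxx.
move: hf; rewrite negb_or => /andP[hf hs].
rewrite IH //; congr (_ || _).
rewrite /rens /=; case: eqP => //= e; subst l.
have h1 : (st n).1.1 == i -> (st n).1.2 != b.
  by move=> e; move: hs; rewrite e /= negb_or => /andP[].
have h2 : (st n).1.1 == i -> (st n).2 != b.
  by move=> e; move: hs; rewrite e /= negb_or => /andP[].
by rewrite !ren_inj.
Qed.

Lemma slots_ren_a n c st i a b : a != b ->
  slots (renc i a b c) (rens i a b st) n i a = false.
Proof.
move=> ab; elim: n => [|n IH] /=.
  rewrite /renc /ren eqxx /=; case: (c i =P a) => [_|ne]; first by rewrite (negbTE ab).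
  by apply/negbTE/eqP => e; apply: ne; rewrite -e.
rewrite IH /= /rens /=; case: ((st n).1.1 =P i) => //= e; rewrite /ren e eqxx /=.
apply/negbTE; rewrite negb_or; apply/andP; split.
- case: ((st n).1.2 =P a) => [_|ne]; first by rewrite eq_sym (negbTE ab).
  by apply/eqP => e'; apply: ne; rewrite e'.
- case: ((st n).2 =P a) => [_|ne]; first by rewrite eq_sym (negbTE ab).
  by apply/eqP => e'; apply: ne; rewrite e'.
Qed.

Lemma slots_ren_set n c st i a b l q : a != b -> slots c st n i a ->
  ~~ slots c st n i b ->
  slots (renc i a b c) (rens i a b st) n l q =
  (slots c st n l q && ~~((l == i) && (q == a))) || ((l == i) && (q == b)).
Proof.
move=> ab ha hb.
case: (l =P i) => [e|ne]; last first.
  have E : ren i a b l q = q by rewrite /ren; case: (l =P i).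
  rewrite -{1}E slots_ren //; last by move/eqP.
  by rewrite andbT orbF.
subst l; rewrite /=; case: (q =P b) => [->|qb].
  have h := @slots_ren n c st i a b i a hb (fun _ => ab).
  rewrite {1}/ren !eqxx /= ha in h.
  by rewrite h orbT.
case: (q =P a) => [->|qa].
  by rewrite slots_ren_a // andbF.
have E : ren i a b i q = q by rewrite /ren eqxx /=; case: (q =P a).
rewrite -{1}E slots_ren ?andbT ?orbF //.
by move=> _; apply/eqP.
Qed.

Lemma valid_slots be c st n l q : valid be c st n -> slots c st n l q -> (q <= be l)%N.
Proof.
elim: n l q => [|n IH] l q /=; first by move=> h /eqP ->.
case=> hv hsa _ hb /orP[/(IH _ _ hv) -> //|/andP[/eqP e /orP[/eqP e1|/eqP e2]]].
- by rewrite -e1 -e; exact: IH _ _ hv hsa.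
- by rewrite -e2 -e.
Qed.

Lemma valid_ren n be c st i a b : valid be c st n -> ~~ slots c st n i b -> (b <= be i)%N ->
  valid be (renc i a b c) (rens i a b st) n.
Proof.
elim: n => [|n IH] /=.
  move=> h hf hb l; rewrite /renc /ren; case: andP => [[/eqP -> _]|_] //.
case=> hv ha hnb hbe; rewrite negb_or => /andP[hf hs] hb.
have hs' : (st n).1.1 == i -> ((st n).1.2 != b) && ((st n).2 != b).
  by move=> e; move: hs; rewrite e /= negb_or.
split.
- exact: IH.
- rewrite /rens /= slots_ren //; by move=> /hs' /andP[].
- rewrite /rens /= slots_ren //; by move=> /hs' /andP[].
- rewrite /rens /= /ren; case: andP => [[/eqP e _]|_] //; by rewrite e.
Qed.


Lemma slots_ext (c : 'I_d -> nat) st st' n l q : (forall m, (m < n)%N -> st m = st' m) ->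
  slots c st n l q = slots c st' n l q.
Proof.
elim: n => [|n IH] //= h.
by rewrite IH ?h // => m hm; apply: h; apply: ltnW.
Qed.

Lemma valid_ext (be : 'I_d -> nat) c st st' n : (forall m, (m < n)%N -> st m = st' m) ->
  valid be c st n -> valid be c st' n.
Proof.
elim: n => [|n IH] //= h [hv ha hb hbe].
have h' : forall m, (m < n)%N -> st m = st' m by move=> m hm; apply: h; apply: ltnW.
rewrite -(h n) // -!(slots_ext _ _ _ _ _ _ h'); split => //; exact: IH.
Qed.

Lemma valid_mono (be be' : 'I_d -> nat) c st n : (forall l, be l <= be' l)%N ->
  valid be c st n -> valid be' c st n.
Proof.
move=> hb; elim: n => [|n IH] /=.
  by move=> h l; apply: leq_trans (h l) (hb l).
case=> hv ha hn hbe; split => //; [exact: IH|exact: leq_trans hbe (hb _)].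
Qed.

Lemma exists_config (i0 : 'I_d) (be : 'I_d -> nat) : exists c st,
  valid be c st (mabs be) /\ forall l q, slots c st (mabs be) l q = (q <= be l)%N.
Proof.
move: {2}(mabs be) (erefl (mabs be)) => N.
elim: N be => [|N IH] be hN.
  have h0 : forall l, be l = 0%N.
    move=> l; apply/eqP; rewrite -leqn0 -hN /mabs.
    by rewrite (bigD1 l) //= leq_addr.
  exists (fun _ => 0%N), (fun _ => (i0, 0%N, 0%N)); rewrite hN; split.
    by move=> l /=.
  by move=> l q /=; rewrite h0 leqn0.
have [i hi] : exists i, (0 < be i)%N.
  case: (boolP [exists i, 0 < be i]%N) => [/existsP//|/existsPn h].
  exfalso; move: hN; rewrite /mabs big1 // => l _.
  by apply/eqP; rewrite -leqn0 leqNgt h.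
pose be' := fun l => if l == i then (be l).-1 else be l.
have hN' : mabs be' = N.
  move: hN; rewrite /mabs (bigD1 i) //= [in X in _ -> X = _](bigD1 i) //=.
  rewrite /be' eqxx => e.
  have -> : (\sum_(l < d | l != i) (if l == i then (be l).-1 else be l) =
     \sum_(l < d | l != i) be l)%N.
    by apply: eq_bigr => l /negbTE ->.
  move: e hi; case: (be i) => // m /= [<-] _; by [].
have [c [st [hv hs]]] := IH be' hN'.
rewrite hN' in hv hs.
pose st' := fun n => if n == N then (i, (be i).-1, be i) else st n.
have hext : forall m, (m < N)%N -> st m = st' m.
  by move=> m hm; rewrite /st'; case: eqP => // e; move: hm; rewrite e ltnn.
exists c, st'; rewrite hN /=; split.
  have hmono : forall l, (be' l <= be l)%N.
    by move=> l; rewrite /be'; case: eqP => // ->; apply: leq_pred.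
  rewrite /st' eqxx /= -!(slots_ext _ _ _ _ _ _ hext) !hs /be' eqxx.
  split => //.
  - apply: valid_mono hmono _; exact: valid_ext hext hv.
  - by rewrite -ltnNge ltn_predL.
move=> l q; rewrite -(slots_ext _ _ _ _ _ _ hext) hs /st' eqxx /= /be'.
case: (i =P l) => [<-|ne] /=; last first.
  by rewrite orbF; case: (l =P i) => // e; exfalso; apply: ne; rewrite e.
rewrite eqxx.
move: hi; case: (be i) => // m _ /=.
rewrite [in RHS]leq_eqVlt ltnS.
case: (m =P q) => [<-|_] /=; first by rewrite leqnn !orbT.
by rewrite eq_sym orbC.
Qed.


Variable K : TopField.type.
Fixpoint E (n : nat) : TopLmod.type K :=
  match n with 0 => Kpow K 'I_d | n.+1 => (E n * E n * Kv K)%type end.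

Lemma pairD n (a b a' b' : E n) (k k' : Kv K) :
  ((a, b, k) + (a', b', k') : E n.+1) = (a + a', b + b', k + k').
Proof. by []. Qed.
Lemma pairB n (a b a' b' : E n) (k k' : Kv K) :
  ((a, b, k) - (a', b', k') : E n.+1) = (a - a', b - b', k - k').
Proof. by []. Qed.
Lemma pairZ n (a b : E n) (k t : Kv K) :
  (t *: (a, b, k) : E n.+1) = (t *: a, t *: b, t *: k).
Proof. by []. Qed.

Lemma scaleKv (t u : K) : (t *: (u : Kv K)) = t * u.
Proof. by []. Qed.
Lemma kpowDZ (I : finType) (f g : Kpow K I) (t : K) l : (f + t *: g) l = f l + t * g l.
Proof. by []. Qed.
Lemma kpowB (I : finType) (f g : Kpow K I) l : (f - g) l = f l - g l.
Proof. by []. Qed.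
Lemma kpowZ (I : finType) (g : Kpow K I) (t : K) l : (t *: g) l = t * g l.
Proof. by []. Qed.

Variable alpha : 'I_d -> nat.
Local Notation P := (Kpow K (sds_idx alpha)).
Definition xs (x : P) (i : 'I_d) (q : nat) : K :=
  x (Tagged (fun i => 'I_(alpha i).+1) (@inord (alpha i) q)).

Fixpoint vv (c : 'I_d -> nat) (st : nat -> step) (i : 'I_d) (a : nat) (n : nat) : E n :=
  match n return E n with
  | 0 => ((fun l => if (l == i) && (c l == a) then 1 else 0) : Kpow K 'I_d)
  | n'.+1 => (vv c st i a n', 0,
      ((if (st n').1.1 == i then ((st n').2 == a)%:R - ((st n').1.2 == a)%:R else 0) : Kv K))
  end.

Fixpoint phi (bv : bool) (c : 'I_d -> nat) (st : nat -> step) (x : P) (n : nat) : E n :=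
  match n return E n with
  | 0 => ((fun l => xs x l (c l)) : Kpow K 'I_d)
  | n'.+1 => (phi bv c st x n', (if bv then vv c st (st n').1.1 (st n').1.2 n' else 0),
      (xs x (st n').1.1 (st n').2 - xs x (st n').1.1 (st n').1.2 : Kv K))
  end.

Lemma vv_ren n c st i a b i' a' : ~~ slots c st n i b -> (i' == i -> a' != b) ->
  vv (renc i a b c) (rens i a b st) i' (ren i a b i' a') n = vv c st i' a' n.
Proof.
elim: n => [|n IH] /= hf ha.
  apply: functional_extensionality_dep => l /=.
  case: (l =P i') => [->|] //=; rewrite /renc ren_inj //.
  by move=> /eqP e; subst i'; apply/eqP => e'; move: hf; rewrite e' eqxx.
move: hf; rewrite negb_or => /andP[hf hs].
rewrite IH //; congr (_, _, _).
rewrite /rens /=; case: ((st n).1.1 =P i') => // e; subst i'.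
have h1 : (st n).1.1 == i -> (st n).1.2 != b.
  by move=> e; move: hs; rewrite e /= negb_or => /andP[].
have h2 : (st n).1.1 == i -> (st n).2 != b.
  by move=> e; move: hs; rewrite e /= negb_or => /andP[].
by rewrite !ren_inj.
Qed.

Lemma phi_shift n c st i a b x : ~~ slots c st n i b ->
  phi true (renc i a b c) (rens i a b st) x n =
  phi true c st x n + (xs x i b - xs x i a) *: vv c st i a n.
Proof.
elim: n => [|n IH] /= hf.
  apply: functional_extensionality_dep => l /=.
  rewrite kpowDZ /renc /ren; case: (l =P i) => [->|_] /=; last by rewrite mulr0 addr0.
  case: (c i =P a) => [->|_] /=; last by rewrite mulr0 addr0.
  by rewrite mulr1 addrC subrK.
move: hf; rewrite negb_or => /andP[hf hs].
rewrite pairZ pairD IH // scaler0 addr0; congr (_, _, _).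
  rewrite /rens /= vv_ren //.
  by move=> e; move: hs; rewrite e /= negb_or => /andP[].
rewrite /rens /= /ren.
case: ((st n).1.1 =P i) => [e|_] /=; last by rewrite scaler0 addr0.
rewrite e /=.
case: ((st n).2 =P a) => [->|_]; case: ((st n).1.2 =P a) => [->|_] /=.
all: rewrite scaleKv; ring.
Qed.

Fixpoint Vn (U : set (E 0)) (n : nat) : set (E n) :=
  match n with 0 => U | n.+1 => V1 (Vn U n) end.

Definition jof (c : 'I_d -> nat) : {dffun forall i : 'I_d, 'I_(alpha i).+1} :=
  finfun (fun l => @inord (alpha l) (c l)).

Lemma sel_jof (x : P) c : sds_sel x (jof c) = (fun l => xs x l (c l)).
Proof.
apply: functional_extensionality_dep => l.
by rewrite /sds_sel /jof ffunE.
Qed.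

Lemma phi_mem (U : set (E 0)) (x : P) n c st :
  (forall j, U (sds_sel x j)) -> valid alpha c st n -> Vn U n (phi true c st x n).
Proof.
move=> hU; elim: n c st => [|n IH] c st /=.
  by move=> _; rewrite -sel_jof; apply: hU.
case=> hv ha hnb hbe; split; first exact: IH.
rewrite -phi_shift //; apply: IH; exact: valid_ren.
Qed.

Lemma xsB (x y : P) i q : xs (x - y) i q = xs x i q - xs y i q.
Proof. by []. Qed.
Lemma xsZ (x : P) (t : K) i q : xs (t *: x) i q = t * xs x i q.
Proof. by []. Qed.

Lemma phi_lin c st (x y : P) n :
  phi true c st x n - phi true c st y n = phi false c st (x - y) n.
Proof.
elim: n => [|n IH] /=.
  by apply: functional_extensionality_dep => l.
rewrite pairB IH subrr; congr (_, _, _).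
rewrite !xsB; change ((xs x (st n).1.1 (st n).2 - xs x (st n).1.1 (st n).1.2) -
  (xs y (st n).1.1 (st n).2 - xs y (st n).1.1 (st n).1.2) =
  (xs x (st n).1.1 (st n).2 - xs y (st n).1.1 (st n).2) -
  (xs x (st n).1.1 (st n).1.2 - xs y (st n).1.1 (st n).1.2)); ring.
Qed.

Lemma phi_hom c st (z : P) (t : K) n :
  phi false c st (t *: z) n = t *: phi false c st z n.
Proof.
elim: n => [|n IH] /=.
  by apply: functional_extensionality_dep => l.
rewrite pairZ IH scaler0; congr (_, _, _).
rewrite !xsZ scaleKv; ring.
Qed.

Lemma phi0 c st n : phi false c st 0 n = 0.
Proof. by rewrite -(scale0r (0 : P)) phi_hom scale0r. Qed.

Lemma subK_cont (X : topologicalType) (u v : X -> K) :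
  is_topological_field K -> continuous u -> continuous v ->
  continuous (fun x => u x - v x).
Proof.
case=> hadd hopp _ _ _ cu cv x.
have h1 : continuous (fun x => (u x, - v x)).
  apply: pair_cont => // y; apply: continuous_comp; [exact: cv|exact: hopp].
apply: (continuous_comp (h1 x) (hadd _)).
Qed.

Lemma xs_cont i q : continuous (fun x : P => xs x i q).
Proof. exact: (@proj_continuous _ (fun _ => Kv K) (Tagged (fun i => 'I_(alpha i).+1) (@inord (alpha i) q))). Qed.

Lemma phi_cont bv c st n : is_topological_field K ->
  continuous (fun x => phi bv c st x n).
Proof.
move=> hK; elim: n => [|n IH] /=.
  by apply: ptws_cont => l; apply: xs_cont.
apply: pair_cont; first apply: pair_cont => //.
  exact: cst_continuous.
apply: (@subK_cont P (fun x => xs x _ _) (fun x => xs x _ _)) => //; exact: xs_cont.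
Qed.

Variables (F : TopLmod.type K) (f : Kpow K 'I_d -> F).
Local Notation tg k := (Tagged (fun i => 'I_(alpha i).+1) k).
Local Notation J := {dffun forall i : 'I_d, 'I_(alpha i).+1}.

Definition wc (T : 'I_d -> pred nat) (x : P) (j : J) (l : 'I_d) : K :=
  \prod_(k : 'I_(alpha l).+1 | T l k && (k != j l)) ((x (tg (j l)) - x (tg k) : K)^-1).

Definition G (T : 'I_d -> pred nat) (x : P) : F :=
  \sum_(j : J | [forall l, T l (j l)]) (\prod_(l < d) wc T x j l) *: f (sds_sel x j).

Lemma ordle l (k : 'I_(alpha l).+1) : (k <= alpha l)%N.
Proof. by rewrite -ltnS ltn_ord. Qed.

Lemma G_ext T T' x : (forall l q, (q <= alpha l)%N -> T l q = T' l q) -> G T x = G T' x.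
Proof.
move=> h; apply: eq_big => [j|j _].
  by apply: eq_forallb => l; rewrite h // ordle.
congr (_ *: _); apply: eq_bigr => l _; apply: eq_bigl => k; by rewrite h // ordle.
Qed.

Lemma G_full x : G (fun l q => (q <= alpha l)%N) x = fdd f x.
Proof.
rewrite /G /fdd; apply: eq_big => [j|j _].
  by apply/forallP => l; rewrite ordle.
congr (_ *: _); apply: eq_bigr => l _; apply: eq_bigl => k; by rewrite ordle.
Qed.

Lemma G_base c x : (forall l, c l <= alpha l)%N ->
  G (fun l q => q == c l) x = f (fun l => xs x l (c l)).
Proof.
move=> hc; rewrite /G (big_pred1 (jof c)); last first.
  move=> j /=; apply/forallP/eqP => [h|->] .
    apply/ffunP => l; rewrite /jof ffunE; apply: val_inj => /=.
    by rewrite inordK ?ltnS // (eqP (h l)).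
  by move=> l; rewrite /jof ffunE inordK ?ltnS.
rewrite big1 ?scale1r ?sel_jof // => l _.
rewrite /wc big_pred0 // => k; apply/negbTE; rewrite negb_and negbK.
case: (k =P c l :> nat) => [e|_] //=; apply/eqP; apply: val_inj.
by rewrite /jof ffunE /= inordK ?ltnS // e.
Qed.

Lemma ifZ (c : bool) (u : K) (v : F) : (if c then u *: v else 0) = (if c then u else 0) *: v.
Proof. by case: c; rewrite ?scale0r. Qed.
Lemma ifM (c : bool) (u w : K) : (if c then u * w else 0) = (if c then u else 0) * w.
Proof. by case: c; rewrite ?mul0r. Qed.

Lemma forall_split (Q : 'I_d -> bool) i : [forall l, Q l] = Q i && [forall l, (l != i) ==> Q l].
Proof.
apply/forallP/andP => [h|[h1 /forallP h2] l].
  by split; [exact: h|apply/forallP => l; apply/implyP => _; exact: h].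
case: (l =P i) => [->//|/eqP ne]; exact: implyP (h2 l) ne.
Qed.

Lemma nat_ord i b (k : 'I_(alpha i).+1) : (b <= alpha i)%N ->
  ((k : nat) == b) = (k == @inord (alpha i) b).
Proof. by move=> hb; rewrite -(inj_eq val_inj) /= inordK. Qed.

Lemma G_step (T : 'I_d -> pred nat) (x : P) i a b : (a <= alpha i)%N -> (b <= alpha i)%N -> T i a -> ~~ T i b ->
  injective (fun k : 'I_(alpha i).+1 => (x (tg k) : K)) ->
  G (fun l q => T l q || ((l == i) && (q == b))) x =
  (xs x i b - xs x i a)^-1 *:
    (G (fun l q => (T l q && ~~((l == i) && (q == a))) || ((l == i) && (q == b))) x - G T x).
Proof.
move=> ha hb hTa hTb yi.
set T1 := (fun l q => _ || _).
set T2 := (fun l q => (_ && _) || _).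
rewrite /G big_mkcond [X in _ *: (X - _)]big_mkcond [X in _ *: (_ - X)]big_mkcond /=.
rewrite -sumrB scaler_sumr; apply: eq_bigr => j _.
rewrite !ifZ -scalerBl scalerA; congr (_ *: _).
have hR1 : [forall l, (l != i) ==> T1 l (j l)] = [forall l, (l != i) ==> T l (j l)].
  apply: eq_forallb => l; case: (l =P i) => //= /eqP /negbTE li; by rewrite /T1 li orbF.
have hR2 : [forall l, (l != i) ==> T2 l (j l)] = [forall l, (l != i) ==> T l (j l)].
  apply: eq_forallb => l; case: (l =P i) => //= /eqP /negbTE li; by rewrite /T2 li /= andbT orbF.
have hP1 : \prod_(l < d) wc T1 x j l = wc T1 x j i * \prod_(l < d | l != i) wc T x j l.
  rewrite (bigD1 i) //=; congr (_ * _); apply: eq_bigr => l /negbTE li.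
  by apply: eq_bigl => k; rewrite /T1 li orbF.
have hP2 : \prod_(l < d) wc T2 x j l = wc T2 x j i * \prod_(l < d | l != i) wc T x j l.
  rewrite (bigD1 i) //=; congr (_ * _); apply: eq_bigr => l /negbTE li.
  by apply: eq_bigl => k; rewrite /T2 li /= andbT orbF.
have hP : \prod_(l < d) wc T x j l = wc T x j i * \prod_(l < d | l != i) wc T x j l.
  by rewrite (bigD1 i).
rewrite (forall_split (fun l => T1 l (j l)) i) (forall_split (fun l => T2 l (j l)) i)
  (forall_split (fun l => T l (j l)) i) hR1 hR2 hP1 hP2 hP.
set Q := \prod_(l < d | l != i) wc T x j l.
case: [forall l, (l != i) ==> T l (j l)]; last by rewrite !andbF subrr mulr0.
rewrite !andbT !ifM -mulrBl mulrA; congr (_ * _).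
pose y := fun k : 'I_(alpha i).+1 => (x (tg k) : K).
pose To := [pred k : 'I_(alpha i).+1 | T i k].
pose A := @inord (alpha i) a.
pose B := @inord (alpha i) b.
have hA : To A by rewrite /To /A /= inordK.
have hB : ~~ To B by rewrite /To /B /= inordK.
have := @oneD _ (alpha i) y To A B (j i) yi hA hB.
have e1 : T1 i (j i) = To (j i) || (j i == B) by rewrite /T1 eqxx /= nat_ord.
have e2 : T2 i (j i) = (To (j i) && (j i != A)) || (j i == B).
  by rewrite /T2 eqxx /= !nat_ord.
have w1 : wc T1 x j i = Wp y [pred k | To k || (k == B)] (j i).
  by apply: eq_bigl => k; rewrite /T1 /= eqxx /= nat_ord.
have w2 : wc T2 x j i = Wp y [pred k | (To k && (k != A)) || (k == B)] (j i).
  by apply: eq_bigl => k; rewrite /T2 /= eqxx /= !nat_ord.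
have w : wc T x j i = Wp y To (j i) by [].
by rewrite e1 e2 w1 w2 w.
Qed.


Lemma slots_S c st n l q : valid alpha c st n.+1 ->
  slots c st n.+1 l q = slots c st n l q || ((l == (st n).1.1) && (q == (st n).2)).
Proof.
case=> _ ha _ _ /=.
case: ((st n).1.1 =P l) => [e|ne]; last first.
  by case: (l =P (st n).1.1) => // e; exfalso; apply: ne.
subst l; rewrite eqxx /=; case: ((st n).1.2 =P q) => [e'|_] /=; last by rewrite eq_sym.
by subst q; rewrite ha.
Qed.

Lemma brack_inj {U : set (E 0)} {x : P} {i} : U_brack U x ->
  injective (fun k : 'I_(alpha i).+1 => (x (tg k) : K)).
Proof.
case=> _ h j k e; apply/eqP; apply/negPn/negP => ne.
by move: (h i _ _ ne); rewrite /= e eqxx.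
Qed.

Lemma brack_ne {U : set (E 0)} {x : P} {i a b} : U_brack U x -> (a <= alpha i)%N -> (b <= alpha i)%N ->
  a != b -> xs x i b - xs x i a != 0.
Proof.
move=> hx ha hb ab; rewrite subr_eq0; apply/eqP => /(brack_inj hx) e.
have : (@inord (alpha i) b : nat) = (@inord (alpha i) a : nat) by rewrite e.
by rewrite !inordK ?ltnS // => e'; move: ab; rewrite e' eqxx.
Qed.

Lemma chain_eval (U : set (E 0)) (gs : forall n, E n -> F) (k : nat) (x : P) :
  gs 0%N = f ->
  (forall n, (n < k)%N -> forall z, V1o (Vn U n) z -> gs n.+1 z = gdq (gs n) z) ->
  U_brack U x ->
  forall n c st, (n <= k)%N -> valid alpha c st n ->
  gs n (phi true c st x n) = G (slots c st n) x.
Proof.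
move=> hf hag hx; elim=> [|n IH] c st hn hv.
  by rewrite hf /=; rewrite G_base.
have hv0 := hv; case: hv => hv ha hnb hbe.
set i := (st n).1.1; set a := (st n).1.2; set b := (st n).2.
have hai : (a <= alpha i)%N by apply: valid_slots hv ha.
have ab : a != b by apply/eqP => e; move: hnb; rewrite -/i -/a -/b -e ha.
have hmem : V1o (Vn U n) (phi true c st x n.+1).
  split; first by case: hx => hu _; exact: (phi_mem _ _ _ _ _ hu hv0).
  exact: brack_ne hx hai hbe ab.
rewrite (hag n hn _ hmem) /gdq /=.
rewrite -phi_shift // IH ?(ltnW hn) //; last exact: valid_ren.
rewrite IH ?(ltnW hn) //.
rewrite (@G_ext (slots c st n.+1) (fun l q => slots c st n l q || ((l == i) && (q == b))) x); last first.
  by move=> l q _; rewrite slots_S.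
rewrite (@G_ext (slots (renc i a b c) (rens i a b st) n)
  (fun l q => (slots c st n l q && ~~((l == i) && (q == a))) || ((l == i) && (q == b))) x);
  last by move=> l q _; rewrite slots_ren_set.
rewrite -G_step //; exact: brack_inj hx.
Qed.

Lemma holder_comp (R : realType) (abs : K -> R) (sigma : R) n (V : set (E n))
  (g : E n -> F) (A : set P) (phi1 psi : P -> E n) :
  C0sigma abs sigma V g -> continuous phi1 -> continuous psi ->
  (forall x y, phi1 y - phi1 x = psi (y - x)) ->
  (forall (t : K) z, psi (t *: z) = t *: psi z) ->
  (forall x, A x -> V (phi1 x)) -> C0sigma abs sigma A (g \o phi1).
Proof.
move=> hg cphi cpsi hlin hhom hAV x0 Ax0 q hq.
have [p [[hp1 hp2 hp3] [W hW hle]]] := hg _ (hAV _ Ax0) q hq.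
have psi0 : psi 0 = 0 by rewrite -(scale0r (0 : P)) hhom scale0r.
exists (p \o psi); split.
  split => /=.
  - by move=> x; apply: hp1.
  - by move=> t x; rewrite hhom hp2.
  - move=> r hr; apply: (cpsi 0 [set y | p y < r]).
    by move: (hp3 r hr); rewrite -psi0.
exists (phi1 @^-1` W); first exact: cphi x0 _ hW.
by move=> x y Ax Ay Wx Wy /=; rewrite -hlin; apply: hle => //; apply: hAV.
Qed.

Lemma exists_i0 : (1 <= mabs alpha)%N -> exists i0 : 'I_d, True.
Proof.
move=> h1; case: (boolP [exists i, 0 < alpha i]%N) => [/existsP [i0 _]|/existsPn h].
  by exists i0.
exfalso; move: h1; rewrite /mabs big1 // => l _.
by apply/eqP; rewrite -leqn0 leqNgt h.
Qed.

Lemma sds_part (U : set (E 0)) (gs : forall n, E n -> F) k :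
  is_topological_field K -> gs 0%N = f ->
  (forall n, (n <= k)%N -> {within Vn U n, continuous gs n}) ->
  (forall n, (n < k)%N -> forall z, V1o (Vn U n) z -> gs n.+1 z = gdq (gs n) z) ->
  (1 <= mabs alpha <= k)%N ->
  exists c st,
  [/\ {within @U_ang K d U alpha, continuous (fun x : P => gs (mabs alpha) (phi true c st x (mabs alpha)))},
      (forall x, U_brack U x -> gs (mabs alpha) (phi true c st x (mabs alpha)) = fdd f x) &
      valid alpha c st (mabs alpha)].
Proof.
move=> hK hf hc hag /andP[h1 h2].
have [i0 _] := exists_i0 h1.
have [c [st [hv hs]]] := exists_config i0 alpha.
exists c, st; split => //.
- have hmem : forall x, @U_ang K d U alpha x -> Vn U (mabs alpha) (phi true c st x (mabs alpha)).
    move=> x hx; exact: phi_mem _ _ _ _ _ hx hv.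
  exact: (within_comp (hc _ h2) (phi_cont true c st (mabs alpha) hK) hmem).
- move=> x hx /=; rewrite (@chain_eval U gs k x hf hag hx _ c st h2 hv) -G_full.
  by apply: G_ext => l q _; rewrite hs.
Qed.

Definition Relg (U : set (E 0)) (Pl : nat -> forall n, (E n -> F) -> Prop) (k n : nat)
  (g : E n -> F) (g1 : E n.+1 -> F) : Prop :=
  (forall z, V1o (Vn U n) z -> g1 z = gdq g z) /\ Pl (k - n.+1)%N n.+1 g1.

Definition pickg (Rel : forall n, (E n -> F) -> (E n.+1 -> F) -> Prop) n (g : E n -> F)
  : E n.+1 -> F :=
  match pselect (exists g1, Rel n g g1) with
  | left H => proj1_sig (cid H)
  | right _ => fun _ => 0
  end.

Fixpoint gsq (Rel : forall n, (E n -> F) -> (E n.+1 -> F) -> Prop) (f0 : E 0 -> F) n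
  : E n -> F :=
  match n return E n -> F with 0 => f0 | n'.+1 => pickg Rel n' (gsq Rel f0 n') end.

Lemma pickgP Rel n g : (exists g1, Rel n g g1) -> Rel n g (pickg Rel n g).
Proof. by rewrite /pickg; case: pselect => // H _; exact: (proj2_sig (cid H)). Qed.

Lemma gen_chain U (Pl : nat -> forall n, (E n -> F) -> Prop) k f0 :
  (forall m n g, Pl m.+1 n g ->
     exists g1, (forall z, V1o (Vn U n) z -> g1 z = gdq g z) /\ Pl m n.+1 g1) ->
  Pl k 0%N f0 ->
  (forall n, (n <= k)%N -> Pl (k - n)%N n (gsq (Relg U Pl k) f0 n)) /\
  (forall n, (n < k)%N -> forall z, V1o (Vn U n) z ->
     gsq (Relg U Pl k) f0 n.+1 z = gdq (gsq (Relg U Pl k) f0 n) z).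
Proof.
move=> hun h0.
have step : forall n, (n < k)%N -> Pl (k - n)%N n (gsq (Relg U Pl k) f0 n) ->
    Relg U Pl k n (gsq (Relg U Pl k) f0 n) (gsq (Relg U Pl k) f0 n.+1).
  move=> n hn hP; apply: pickgP; apply: hun; by rewrite subnSK.
have first : forall n, (n <= k)%N -> Pl (k - n)%N n (gsq (Relg U Pl k) f0 n).
  elim=> [|n IH] hn; first by rewrite subn0.
  exact: (step n hn (IH (ltnW hn))).2.
split => // n hn; exact: (step n hn (first n (ltnW hn))).1.
Qed.
End Comb.

Theorem lemma2p3 (K : TopField.type) (d : nat) (F : TopLmod.type K)
  (U : set (Kpow K 'I_d)) (f : Kpow K 'I_d -> F) :
  is_topological_field K -> is_tvs F ->
  (open U \/
   exists Ui : 'I_d -> set K,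
     (forall i, Ui i `<=` closure (interior (Ui i))) /\
     U = [set x | forall i, Ui i (x i)]) ->
  (forall k : nat, CkBGN k U f -> CkSDS k U f) /\
  (forall (R : realType) (abs : K -> R) (sigma : R),
     is_valued_field abs -> 0 < sigma ->
     forall k : nat, CksigmaBGN abs sigma k U f -> CksigmaSDS abs sigma k U f).
Proof.
move=> hK hF _; split.
- move=> k hk.
  pose Pl := fun m n (g : E d K n -> F) => CkBGN m (Vn d K U n) g.
  have hun : forall m n g, Pl m.+1 n g -> exists g1,
      (forall z, V1o (Vn d K U n) z -> g1 z = gdq g z) /\ Pl m n.+1 g1.
    by move=> m n g [_ H].
  have [hP hag] := @gen_chain d K F U Pl k f hun hk.
  set gs := gsq d K F (Relg d K F U Pl k) f in hP hag.
  have hc : forall n, (n <= k)%N -> {within Vn d K U n, continuous gs n}.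
    by move=> n hn; have := hP n hn; rewrite /Pl; case: (k - n)%N => [|m] [].
  split; first by case: (k) hk => [|m] [].
  move=> alpha hal.
  have [c [st [h1 h2 _]]] := @sds_part d K alpha F f U gs k hK erefl hc hag hal.
  by exists (fun x => gs (mabs alpha) (phi d K alpha true c st x (mabs alpha))).
- move=> R abs sigma _ _ k hk.
  pose Pl := fun m n (g : E d K n -> F) => CksigmaBGN abs sigma m (Vn d K U n) g.
  have hun : forall m n g, Pl m.+1 n g -> exists g1,
      (forall z, V1o (Vn d K U n) z -> g1 z = gdq g z) /\ Pl m n.+1 g1.
    by move=> m n g [_ _ H].
  have [hP hag] := @gen_chain d K F U Pl k f hun hk.
  set gs := gsq d K F (Relg d K F U Pl k) f in hP hag.
  have hc : forall n, (n <= k)%N -> {within Vn d K U n, continuous gs n}.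
    by move=> n hn; have := hP n hn; rewrite /Pl; case: (k - n)%N => [|m] [].
  have hs0 : forall n, (n <= k)%N -> C0sigma abs sigma (Vn d K U n) (gs n).
    by move=> n hn; have := hP n hn; rewrite /Pl; case: (k - n)%N => [|m] [].
  have [hk1 hk2] : {within U, continuous f} /\ C0sigma abs sigma U f.
    by case: (k) hk => [|m] [].
  split => //.
  move=> alpha hal.
  have [c [st [h1 h2 hv]]] := @sds_part d K alpha F f U gs k hK erefl hc hag hal.
  have hN : (mabs alpha <= k)%N by case/andP: hal.
  exists (fun x => gs (mabs alpha) (phi d K alpha true c st x (mabs alpha))).
  split => //.
  apply: (@holder_comp d K alpha F R abs sigma (mabs alpha) (Vn d K U (mabs alpha))
    (gs (mabs alpha)) _ (fun x => phi d K alpha true c st x (mabs alpha))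
    (fun z => phi d K alpha false c st z (mabs alpha)) (hs0 _ hN)).
  + exact: phi_cont.
  + exact: phi_cont.
  + by move=> x y; rewrite phi_lin.
  + by move=> t z; rewrite phi_hom.
  + by move=> x hx; apply: phi_mem hx hv.
Qed.
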